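(* Let $E$ be any graph, $K$ a field, and let $(H,S)$ and $(G,T)$ be admissible pairs of $E$ with $(H,S)\leq (G,T)$. Let $v\in B_G$. Then $v^G\in I(H,S)$ (in $L_K(E)$) if and only if $v\in S$ and $v$ emits no edges whose range lies in $G\setminus H$.
   Context: $E$ is a directed graph of arbitrary cardinality with source and range maps $\mathbf{s},\mathbf{r}$; a vertex is an infinite emitter if it emits infinitely many edges. $L_K(E)$ denotes the Leavitt path algebra of $E$ over $K$ (generated by vertices, edges and ghost edges $e^*$ subject to the usual relations (V), (E1), (E2), (CK1), (CK2)). A set $H\subseteq E^0$ is hereditary if every vertex reachable by a path from a vertex of $H$ lies in $H$, and saturated if every vertex $v$ that emits finitely many but at least one edge and has $\mathbf{r}(\mathbf{s}^{-1}(v))\subseteq H$ lies in $H$. For hereditary saturated $H$, the breaking vertices of $H$ form the set $B_H=\{v\in E^0\setminus H: v \text{ is an infinite emitter and } 0<|\mathbf{s}^{-1}(v)\cap\mathbf{r}^{-1}(E^0\setminus H)|<\infty\}$, and for $v\in B_H$ one puts $v^H=v-\sum ee^*$, the sum over $e\in \mathbf{s}^{-1}(v)\cap\mathbf{r}^{-1}(E^0\setminus H)$. An admissible pair is a pair $(H,S)$ with $H$ hereditary and saturated and $S\subseteq B_H$; $I(H,S)$ is the ideal of $L_K(E)$ generated by $H\cup\{v^H: v\in S\}$. Admissible pairs are ordered by $(H,S)\leq (G,T)$ iff $H\subseteq G$ and $S\subseteq G\cup T$. *)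

(* Defs.v *)
From HB Require Import structures.
From mathcomp Require Import all_boot all_algebra.
From mathcomp Require Import boolp classical_sets cardinality.
From Stdlib Require Import Relations.
Set Implicit Arguments. Unset Strict Implicit. Unset Printing Implicit Defensive.
Import GRing.Theory.
Local Open Scope ring_scope.
Local Open Scope classical_set_scope.

(* A directed graph E = (V, Ed, s, r) of arbitrary cardinality:
   V, Ed are arbitrary (choice) types, s = source, r = range. *)

Section LPA.
Variables (V Ed : choiceType) (s r : Ed -> V).

Definition emitted (v : V) : set Ed := [set e | s e = v].

Definition infinite_emitter (v : V) : Prop := infinite_set (emitted v).

Definition edge_rel : relation V := fun u w => exists e, s e = u /\ r e = w.
Definition reaches : relation V := clos_refl_trans V edge_rel.

Definition hereditary (H : set V) : Prop :=
  forall u w, H u -> reaches u w -> H w.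

Definition saturated (H : set V) : Prop :=
  forall v, finite_set (emitted v) -> emitted v !=set0 ->
    (forall e, s e = v -> H (r e)) -> H v.

Definition out_edges (H : set V) (v : V) : set Ed :=
  [set e | s e = v /\ ~ H (r e)].

Definition breaking (H : set V) (v : V) : Prop :=
  ~ H v /\ infinite_emitter v /\ finite_set (out_edges H v) /\
  out_edges H v !=set0.

Definition admissible (H S : set V) : Prop :=
  hereditary H /\ saturated H /\ S `<=` breaking H.

Definition pair_le (H S G T : set V) : Prop :=
  H `<=` G /\ S `<=` G `|` T.

Variable K : fieldType.

Definition gen := (V + (Ed + Ed))%type.
Definition gV (v : V) : gen := inl v.
Definition gE (e : Ed) : gen := inr (inl e).
Definition gG (e : Ed) : gen := inr (inr e).   (* ghost edge e^* *)

Definition word := seq gen.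

(* formal K-linear combinations of words, as lists of (coefficient, word) *)
Definition fpoly := seq (K * word).

Definition coef (p : fpoly) (w : word) : K := \sum_(x <- p | x.2 == w) x.1.

Definition feq (p q : fpoly) : Prop := forall w, coef p w = coef q w.

Definition fmul (p q : fpoly) : fpoly :=
  [seq (a.1 * b.1, a.2 ++ b.2) | a <- p, b <- q].
Definition fopp (p : fpoly) : fpoly := [seq (- a.1, a.2) | a <- p].
Definition fsub (p q : fpoly) : fpoly := p ++ fopp q.
Definition fsum (l : seq fpoly) : fpoly := flatten l.
Definition fgen (x : gen) : fpoly := [:: (1, [:: x])].
Definition fvtx (v : V) : fpoly := fgen (gV v).

(* two-sided ideal generated by a set R of elements of the free algebra:
   finite sums  sum_i a_i * r_i * b_i  with r_i in R (a_i, b_i arbitrary;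
   scalars are absorbed into a_i) *)
Definition in_ideal (R : fpoly -> Prop) (p : fpoly) : Prop :=
  exists l : seq (fpoly * fpoly * fpoly),
    (forall t, t \in l -> R t.1.2) /\
    feq p (fsum [seq fmul (fmul t.1.1 t.1.2) t.2 | t <- l]).

Definition sum_eestar (l : seq Ed) : fpoly :=
  fsum [seq fmul (fgen (gE e)) (fgen (gG e)) | e <- l].

Definition enumerates (l : seq Ed) (A : set Ed) : Prop :=
  uniq l /\ forall e, e \in l <-> A e.

(* Leavitt path algebra relations, written as relators (elements which are 0) *)
Inductive LPA_rel : fpoly -> Prop :=
| relV (v w : V) :
    LPA_rel (fsub (fmul (fvtx v) (fvtx w)) (if v == w then fvtx v else [::]))
| relE1s (e : Ed) : LPA_rel (fsub (fmul (fvtx (s e)) (fgen (gE e))) (fgen (gE e)))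
| relE1r (e : Ed) : LPA_rel (fsub (fmul (fgen (gE e)) (fvtx (r e))) (fgen (gE e)))
| relE2r (e : Ed) : LPA_rel (fsub (fmul (fvtx (r e)) (fgen (gG e))) (fgen (gG e)))
| relE2s (e : Ed) : LPA_rel (fsub (fmul (fgen (gG e)) (fvtx (s e))) (fgen (gG e)))
| relCK1 (e f : Ed) :
    LPA_rel (fsub (fmul (fgen (gG e)) (fgen (gE f)))
                  (if e == f then fvtx (r e) else [::]))
| relCK2 (v : V) (l : seq Ed) :
    finite_set (emitted v) -> emitted v !=set0 -> enumerates l (emitted v) ->
    LPA_rel (fsub (fvtx v) (sum_eestar l)).

(* p represents v^H = v - sum_{e in s^-1(v) /\ r(e) notin H} e e^*  *)
Definition is_vH (H : set V) (v : V) (p : fpoly) : Prop :=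
  exists l, enumerates l (out_edges H v) /\ p = fsub (fvtx v) (sum_eestar l).

Definition IHS_gen (H S : set V) (q : fpoly) : Prop :=
  (exists w, H w /\ q = fvtx w) \/ (exists w, S w /\ is_vH H w q).

(* p (an element of the free algebra) maps into the ideal I(H,S) of L_K(E)
   = free algebra / (LPA relations): equivalently p lies in the ideal of the
   free algebra generated by the relators together with (lifts of) the
   generators of I(H,S). *)
Definition in_IHS (H S : set V) (p : fpoly) : Prop :=
  in_ideal (fun q => LPA_rel q \/ IHS_gen H S q) p.

End LPA.

(* Main.v *)
Require Import Defs.
From mathcomp Require Import all_boot all_algebra.
From mathcomp Require Import boolp classical_sets cardinality.
From Stdlib Require Classical_Prop.
From Stdlib Require Import Relations.
Set Implicit Arguments. Unset Strict Implicit. Unset Printing Implicit Defensive.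
Import GRing.Theory.
Local Open Scope ring_scope.

Section Rep.
Variables (V Ed : choiceType) (K : fieldType) (X : Type).
Variable actg : gen V Ed -> X -> option X.

Definition act (w : word V Ed) (x : X) : option X :=
  foldr (fun g o => obind (actg g) o) (Some x) w.

Lemma act_cat w1 w2 x : act (w1 ++ w2) x = obind (act w1) (act w2 x).
Proof.
elim: w1 => [|g w1 IH] /=; first by case: (act w2 x).
by rewrite IH; case: (act w2 x).
Qed.

Definition ext (g : X -> K) (o : option X) : K := if o is Some y then g y else 0.

Definition Phi (p : fpoly V Ed K) (g : X -> K) (x : X) : K :=
  \sum_(a <- p) a.1 * ext g (act a.2 x).

Lemma Phi_cat p q g x : Phi (p ++ q) g x = Phi p g x + Phi q g x.
Proof. by rewrite /Phi big_cat. Qed.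

Lemma Phi_flatten l g x : Phi (flatten l) g x = \sum_(p <- l) Phi p g x.
Proof. by rewrite /Phi big_flatten. Qed.

Lemma Phi_opp p g x : Phi (fopp p) g x = - Phi p g x.
Proof. by rewrite /Phi /fopp big_map -sumrN; apply: eq_bigr => a _; rewrite mulNr. Qed.

Lemma Phi_sub p q g x : Phi (fsub p q) g x = Phi p g x - Phi q g x.
Proof. by rewrite /fsub Phi_cat Phi_opp. Qed.

Lemma Phi_mul p q g x :
  Phi (fmul p q) g x = \sum_(b <- q) b.1 * ext (Phi p g) (act b.2 x).
Proof.
rewrite /Phi /fmul big_allpairs_dep /= exchange_big /=.
apply: eq_bigr => b _.
under eq_bigr => a _ do rewrite act_cat.
case: (act b.2 x) => [z|] /=; last by rewrite mulr0 big1 // => a _; rewrite mulr0.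
by rewrite mulr_sumr; apply: eq_bigr => a _; rewrite mulrCA mulrA.
Qed.

Lemma sum_if1 (T : eqType) (W : seq T) (i : T) (c : K) :
  uniq W -> \sum_(w <- W) (if w == i then c else 0) = (if i \in W then c else 0).
Proof.
move=> uW; rewrite -big_mkcond big_const_seq /=.
have -> : count (fun w => w == i) W = (i \in W) by rewrite -count_uniq_mem.
by case: (i \in W) => /=; rewrite ?addr0.
Qed.

Lemma sum_coef (p : fpoly V Ed K) (h : word V Ed -> K) (W : seq (word V Ed)) :
  uniq W -> (forall a, a \in p -> a.2 \in W) ->
  \sum_(a <- p) a.1 * h a.2 = \sum_(w <- W) coef p w * h w.
Proof.
move=> uW sub.
rewrite /coef.
under [RHS]eq_bigr => w _ do rewrite mulr_suml big_mkcond.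
rewrite exchange_big /=.
rewrite big_seq_cond [RHS]big_seq_cond.
apply: eq_bigr => a /andP [ap _].
transitivity (\sum_(w <- W) (if w == a.2 then a.1 * h a.2 else 0)).
  by rewrite sum_if1 // sub.
by apply: eq_bigr => w _; rewrite eq_sym; case: eqP => // ->.
Qed.

Lemma Phi_feq p q g x : feq p q -> Phi p g x = Phi q g x.
Proof.
move=> pq; rewrite /Phi.
pose W := undup [seq a.2 | a <- p ++ q].
have uW : uniq W by rewrite undup_uniq.
rewrite (@sum_coef p (fun w => ext g (act w x)) W uW); last first.
  by move=> a ap; rewrite mem_undup map_f // mem_cat ap.
rewrite (@sum_coef q (fun w => ext g (act w x)) W uW); last first.
  by move=> a ap; rewrite mem_undup map_f // mem_cat ap orbT.
by apply: eq_bigr => w _; rewrite pq.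
Qed.

Variable valid : X -> Prop.
Hypothesis actg_valid : forall g x y, valid x -> actg g x = Some y -> valid y.

Lemma act_valid w x y : valid x -> act w x = Some y -> valid y.
Proof.
elim: w y => [|g w IH] y /= vx; first by case=> <-.
case E: (act w x) => [z|] //= /actg_valid; apply; exact: IH.
Qed.

Definition Zero (p : fpoly V Ed K) := forall g x, valid x -> Phi p g x = 0.

Lemma ideal_zero (R : fpoly V Ed K -> Prop) p :
  (forall q, R q -> Zero q) -> in_ideal R p -> Zero p.
Proof.
move=> RZ [l [lR pe]] g x vx.
rewrite (Phi_feq _ _ pe) /fsum Phi_flatten big_map big1_seq //= => t tl.
rewrite Phi_mul big1_seq // => c _.
case E: (act c.2 x) => [z|] /=; last by rewrite mulr0.
rewrite Phi_mul.
have -> : \sum_(b <- t.1.2) b.1 * ext (Phi t.1.1 g) (act b.2 z) = Phi t.1.2 (Phi t.1.1 g) z by [].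
by rewrite (RZ _ (lR _ tl)) ?mulr0 //; apply: (act_valid vx E).
Qed.

End Rep.

Section Graph.
Variables (V Ed : choiceType) (K : fieldType) (s r : Ed -> V) (H S : set V).
Hypothesis hH : hereditary s r H.
Hypothesis satH : saturated s r H.
Hypothesis SB : forall w, S w -> breaking s r H w.

Definition C (w : V) : Prop :=
  (finite_set (emitted s w) /\ (emitted s w !=set0)%classic) \/ S w.

Definition X := ((nat -> V) * (nat -> option Ed))%type.

Definition valid (x : X) : Prop := forall n, ~ H (x.1 n) /\
  match x.2 n with Some e => s e = x.1 n /\ r e = x.1 n.+1 | None => ~ C (x.1 n) end.

Definition xcons (e : Ed) (x : X) : X :=
  (fun n => if n is k.+1 then x.1 k else s e, fun n => if n is k.+1 then x.2 k else Some e).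
Definition xshift (x : X) : X := (fun n => x.1 n.+1, fun n => x.2 n.+1).

Definition actg (g : gen V Ed) (x : X) : option X :=
  match g with
  | inl w => if x.1 0 == w then Some x else None
  | inr (inl e) => if x.1 0 == r e then Some (xcons e x) else None
  | inr (inr e) => if x.2 0 == Some e then Some (xshift x) else None
  end.

Lemma hstep e : ~ H (r e) -> ~ H (s e).
Proof. move=> nr hs; apply: nr; apply: (hH hs); apply: rt_step; by exists e. Qed.

Lemma valid_cons e x : valid x -> x.1 0 = r e -> valid (xcons e x).
Proof.
move=> vx xr [|n] /=; last exact: vx.
split; last by [].
by apply: hstep; rewrite -xr; case: (vx 0).
Qed.

Lemma valid_shift x : valid x -> valid (xshift x).
Proof. by move=> vx n; apply: vx. Qed.

Lemma actg_valid g x y : valid x -> actg g x = Some y -> valid y.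
Proof.
case: g => [w|[e|e]] /= vx.
- by case: eqP => // _ [<-].
- by case: eqP => // xr [<-]; apply: valid_cons.
- by case: eqP => // _ [<-]; apply: valid_shift.
Qed.

Lemma cons_shift x e : valid x -> x.2 0 = Some e -> xcons e (xshift x) = x.
Proof.
case: x => u f vx /= f0; have := vx 0; rewrite /= f0 => -[_ [se _]].
congr pair; apply: funext => -[|n] //=.
Qed.

Lemma shift_cons e x : xshift (xcons e x) = x.
Proof. by case: x. Qed.

Notation Phi := (@Phi V Ed K X actg).

Lemma Phi_nil g x : Phi [::] g x = 0.
Proof. by rewrite /Phi big_nil. Qed.

Lemma Phi_vtx w g x : Phi (fvtx Ed K w) g x = if x.1 0 == w then g x else 0.
Proof. rewrite /Phi big_cons big_nil /= mul1r addr0; by case: eqP. Qed.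

Lemma Phi_gen a g x : Phi (fgen K a) g x = ext g (actg a x).
Proof. by rewrite /Phi big_cons big_nil /= mul1r addr0. Qed.

Lemma Phi_gen2 a b g x : Phi (fmul (fgen K a) (fgen K b)) g x = ext g (obind (actg a) (actg b x)).
Proof. by rewrite /Phi /fmul /= big_cons big_nil /= mul1r mul1r addr0. Qed.

Lemma Phi_ee l g x : valid x -> uniq l ->
  Phi (sum_eestar V K l) g x = if x.2 0 is Some e0 then (if e0 \in l then g x else 0) else 0.
Proof.
move=> vx ul; rewrite /sum_eestar /fsum Phi_flatten big_map.
under eq_bigr => e _ do rewrite Phi_gen2 /=.
case E: (x.2 0) => [e0|]; last first.
  by rewrite big1 // => e _; rewrite E.
rewrite -sum_if1 //; apply: eq_bigr => e _.
case: eqP => [[<-]|ne]; last by case: eqP => // -[] ?; subst; case: ne.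
rewrite eqxx /=.
have := vx 0; rewrite E => -[_ [_ re]]; rewrite /= -re eqxx /=.
by rewrite cons_shift.
Qed.

End Graph.

Section Rels.
Variables (V Ed : choiceType) (K : fieldType) (s r : Ed -> V) (H S : set V).
Hypothesis hH : hereditary s r H.
Hypothesis satH : saturated s r H.
Hypothesis SB : forall w, S w -> breaking s r H w.

Notation Phi := (@Phi V Ed K (X V Ed) (actg s r)).
Notation Zero := (@Zero V Ed K (X V Ed) (actg s r) (valid s r H S)).

Lemma vH_zero w l : uniq l -> (forall e, e \in l -> s e = w) ->
  (forall x, valid s r H S x -> x.1 0 = w -> exists2 e0, x.2 0 = Some e0 & e0 \in l) ->
  Zero (fsub (fvtx Ed K w) (sum_eestar V K l)).
Proof.
move=> ul ls ex g x vx.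
rewrite Phi_sub Phi_vtx (Phi_ee (H:=H) (S:=S)) //.
case: eqP => [xw|xw].
  by have [e0 -> ->] := ex x vx xw; rewrite subrr.
case E: (x.2 0) => [e0|]; last by rewrite subrr.
case: ifP => [el|]; last by rewrite subrr.
by case: xw; have := vx 0; rewrite E => -[_ [<- _]]; apply: ls.
Qed.

Lemma rel_zero q : LPA_rel s r q -> Zero q.
Proof.
case.
- move=> v w g x vx; rewrite Phi_sub Phi_gen2 /=.
  case: (v =P w) => [<-|nvw]; rewrite ?Phi_vtx ?Phi_nil.
    by case: (x.1 0 =P v) => /= [->|]; rewrite ?eqxx subrr.
  case: (x.1 0 =P w) => /= [xw|]; last by rewrite subrr.
  by case: (x.1 0 =P v) => [xv|]; [case: nvw; rewrite -xv -xw|rewrite subrr].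
- move=> e g x vx; rewrite Phi_sub Phi_gen2 Phi_gen /=.
  by case: (x.1 0 =P r e) => _ /=; rewrite ?eqxx subrr.
- move=> e g x vx; rewrite Phi_sub Phi_gen2 Phi_gen /=.
  by case: (x.1 0 =P r e) => [E|_] /=; rewrite ?E ?eqxx subrr.
- move=> e g x vx; rewrite Phi_sub Phi_gen2 Phi_gen /=.
  case: (x.2 0 =P Some e) => [E|_] /=; last by rewrite subrr.
  by have := vx 0; rewrite E => -[_ [_ <-]]; rewrite eqxx subrr.
- move=> e g x vx; rewrite Phi_sub Phi_gen2 Phi_gen /=.
  case: (x.1 0 =P s e) => [E|ne] /=; first by rewrite subrr.
  case: (x.2 0 =P Some e) => [E2|_] /=; last by rewrite subrr.
  by case: ne; have := vx 0; rewrite E2 => -[_ [<- _]].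
- move=> e f g x vx; rewrite Phi_sub Phi_gen2 /=.
  case: (e =P f) => [<-|nef]; rewrite ?Phi_vtx ?Phi_nil.
    by case: (x.1 0 =P r e) => _ /=; rewrite ?eqxx ?shift_cons subrr.
  case: (x.1 0 =P r f) => _ /=; last by rewrite subrr.
  by case: eqP => [[fe]|]; [case: nef|rewrite subrr].
- move=> w l fin ne [ul le].
  apply: vH_zero => //; first by move=> e /le.
  move=> x vx xw; have := vx 0; case E: (x.2 0) => [e0|]; last first.
    by move=> [_ []]; left; rewrite xw.
  by move=> [_ [se _]]; exists e0 => //; apply/le; rewrite /emitted /= se.
Qed.

Lemma gen_zero q : IHS_gen s r H S q -> Zero q.
Proof.
case.
- move=> [w [Hw ->]] g x vx; rewrite Phi_vtx; case: eqP => // xw.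
  by have := vx 0; rewrite xw => -[].
- move=> [w [Sw [l [[ul le] ->]]]].
  apply: vH_zero => //; first by move=> e /le [].
  move=> x vx xw; have := vx 0; case E: (x.2 0) => [e0|]; last first.
    by move=> [_ []]; right; rewrite xw.
  move=> [_ [se re]]; exists e0 => //; apply/le; split => //.
  by rewrite se. by rewrite re; case: (vx 1).
Qed.

End Rels.

Section Exist.
Variables (V Ed : choiceType) (s r : Ed -> V) (H S : set V).
Hypothesis satH : saturated s r H.
Hypothesis SB : forall w, S w -> breaking s r H w.
Variable d : Ed.

Lemma edge_ex w : exists e, C s S w -> ~ H w -> s e = w /\ ~ H (r e).
Proof.
case: (pselect (exists e, s e = w /\ ~ H (r e))) => [[e he]|nex].
  by exists e.
exists d => -[[fin ne]|Sw] Hw; exfalso.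
  apply: Hw. apply: (satH fin ne) => e se.
  by apply: Classical_Prop.NNPP => nr; apply: nex; exists e.
by have [_ [_ [_ [e [se nr]]]]] := SB Sw; apply: nex; exists e.
Qed.

Definition next w := projT1 (cid (edge_ex w)).
Lemma nextP w : C s S w -> ~ H w -> s (next w) = w /\ ~ H (r (next w)).
Proof. exact: (projT2 (cid (edge_ex w))). Qed.

Definition step w := if `[< C s S w >] then r (next w) else w.

Lemma exists_valid u : ~ H u -> exists x, valid s r H S x /\ x.1 0 = u.
Proof.
move=> Hu.
pose useq n := iter n step u.
have nH : forall n, ~ H (useq n).
  elim=> [|n IH] //=; rewrite /step; case: asboolP => // c.
  by have [] := nextP c IH.
exists (useq, fun n => if `[< C s S (useq n) >] then Some (next (useq n)) else None).
split => // n /=; split => //.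
case: asboolP => // c; have [sn _] := nextP c (nH n); split => //.
by rewrite /useq /= /step; case: asboolP.
Qed.

End Exist.

Lemma flatten1 (T : Type) (x : seq T) : flatten [:: x] = x.
Proof. by rewrite /= cats0. Qed.

Lemma fmul1l (V Ed : choiceType) (K : fieldType) (p : fpoly V Ed K) :
  fmul [:: (1, [::])] p = p.
Proof. rewrite /fmul /= cats0; by elim: p => //= -[c w] p ->; rewrite mul1r. Qed.

Lemma fmul1r (V Ed : choiceType) (K : fieldType) (p : fpoly V Ed K) :
  fmul p [:: (1, [::])] = p.
Proof. rewrite /fmul; by elim: p => //= -[c w] p ->; rewrite mulr1 cats0. Qed.

Local Open Scope classical_set_scope.

Theorem lemma3 (K : fieldType) (V Ed : choiceType) (s r : Ed -> V)
  (H S G T : set V) (v : V) (p : fpoly V Ed K) :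
  admissible s r H S -> admissible s r G T -> pair_le H S G T ->
  breaking s r G v ->
  is_vH s r G v p ->
  (in_IHS s r H S p <->
     (S v /\ ~ (exists e : Ed, s e = v /\ G (r e) /\ ~ H (r e)))).
Proof.
move=> [hH [satH SB]] [hG [satG TB]] [HG STG] [nGv [infv [finv nev]]] [l [[ul le] ->]].
split.
- move=> I.
  have RZ : forall q, (LPA_rel s r q \/ IHS_gen s r H S q) ->
      @Zero V Ed K (X V Ed) (actg s r) (valid s r H S) q.
    move=> q [Rq|Rq]; [exact: rel_zero Rq | exact: gen_zero Rq].
  have Z := ideal_zero (@actg_valid _ _ s r H S hH) RZ I.
  have one0 : (1 : K) - 0 != 0 by rewrite subr0 oner_eq0.
  split.
  + apply: Classical_Prop.NNPP => nSv.
    pose x : X V Ed := (fun _ => v, fun _ => None).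
    have vx : valid s r H S x.
      move=> n /=; split; first by move/HG.
      by case=> [[fin _]|//]; apply: infv.
    move: (Z (fun _ => 1) x vx).
    rewrite Phi_sub Phi_vtx (Phi_ee (H:=H) (S:=S)) // /= eqxx => /eqP.
    by rewrite (negbTE one0).
  + move=> [e0 [se [Gr nHr]]].
    have [y [vy y0]] := exists_valid satH SB e0 nHr.
    have vx := valid_cons hH vy y0.
    move: (Z (fun _ => 1) _ vx).
    rewrite Phi_sub Phi_vtx (Phi_ee (H:=H) (S:=S)) // /= se eqxx.
    have -> : (e0 \in l) = false by apply/negbTE/negP => /le [_].
    by move/eqP; rewrite (negbTE one0).
- move=> [Sv noe].
  exists [:: ([:: (1, [::])], fsub (fvtx Ed K v) (sum_eestar V K l), [:: (1, [::])])].
  split.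
    move=> t; rewrite inE => /eqP -> /=; right; right; exists v; split => //.
    exists l; split => //; split => // e; rewrite le; split.
      by move=> [se nG]; split => //; move/HG.
    move=> [se nH]; split => // Gr; apply: noe; by exists e.
  move=> w; rewrite /fsum; cbn [map fst snd]; by rewrite flatten1 fmul1l fmul1r.
Qed.
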